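(* For any linguistically well-formed {\bf MLL1} sequent $\vdash\Gamma$, its $\eta$-reduced and $\eta$-long translations are $\alpha\eta$-equivalent: $||\vdash\Gamma||_{\eta\to}\equiv_{\alpha\eta}||\vdash\Gamma||$.
   Context: {\bf MLL1} formulas are built from atoms $p(x_1,\ldots,x_n)$ by $\otimes$, par $\wp$, $\forall$, $\exists$. Each predicate symbol has a valency $(k,n-k)$ marking the first $k$ argument occurrences as left and the rest as right (polarity inherited in compound formulas); a sequent is linguistically well-formed if every quantifier binds exactly one left and one right occurrence and each free variable has exactly one left and one right free occurrence. Predicate symbols are identified with {\bf ETTC} literals of the same valencies. $\eta$-long translation: each variable $x$ gives two indices $x^l,x^r$; $||p(x_1,\ldots,x_n)||_{\eta\to}=p^{x^l_1\ldots x^l_k}_{x^r_{k+1}\ldots x^r_n}$, $\otimes,\wp$ and contexts translated homomorphically, $||\forall xA||_{\eta\to}=\nabla^{x^r}_{x^l}||A||_{\eta\to}$, $||\exists xA||_{\eta\to}=\triangle^{x^r}_{x^l}||A||_{\eta\to}$, $||\vdash\Gamma||_{\eta\to}=(\vdash\pi(\Gamma)::||\Gamma||_{\eta\to})$ with $\pi(\Gamma)=\prod_{x\in FV(\Gamma)}\delta^{x^r}_{x^l}$, $\delta^j_i=[\epsilon]^j_i$. $\eta$-reduced translation (defined up to $\alpha$-equivalence): variables are indices, left occurrences upper and right lower, $||p(x_1,\ldots,x_n)||=p^{x_1\ldots x_k}_{x_{k+1}\ldots x_n}$, $\otimes,\wp$ homomorphic, $||\forall xA||=\nabla^u_v||A||^{[v/x]}_{[u/x]}$,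 $||\exists xA||=\triangle^u_v||A||^{[v/x]}_{[u/x]}$ for suitable indices $u,v$, $||\vdash\Gamma||=(\vdash||\Gamma||)$ (term $1$). $\alpha$-equivalence of tensor sequents: renaming bound indices and consistently renaming free indices; $\eta$-equivalence: generated by $t::\Gamma\to_\eta\delta^i_jt::\Gamma^{[j/i]}$ and $t::\Gamma\to_\eta\delta^j_it::\Gamma_{[j/i]}$ ($j$ fresh) when $i$ has both a free upper and a free lower occurrence in $\Gamma$. *)

(* Defs.v *)
From Stdlib Require Import Relations List Permutation.
From mathcomp Require Import all_boot.

Set Implicit Arguments.
Unset Strict Implicit.
Unset Printing Implicit Defensive.

Definition var := nat.
Definition idx := nat.

(* P : predicate symbols; arity p = n, lval p = k, valency (k, n-k).        *)
Section MLL1.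
Variables (P : eqType) (lval arity : P -> nat).

Inductive form : Type :=
| Atom of P & seq var
| Tens of form & form
| Par of form & form
| All of var & form
| Ex of var & form.

Fixpoint lcount (x : var) (A : form) : nat :=
  match A with
  | Atom p args => count_mem x (take (lval p) args)
  | Tens A B | Par A B => lcount x A + lcount x B
  | All y A | Ex y A => if y == x then 0 else lcount x A
  end.

Fixpoint rcount (x : var) (A : form) : nat :=
  match A with
  | Atom p args => count_mem x (drop (lval p) args)
  | Tens A B | Par A B => rcount x A + rcount x B
  | All y A | Ex y A => if y == x then 0 else rcount x A
  end.

Fixpoint fv (A : form) : seq var :=
  match A with
  | Atom _ args => args
  | Tens A B | Par A B => fv A ++ fv B
  | All y A | Ex y A => [seq z <- fv A | z != y]
  end.

Definition fv_ctx (G : seq form) : seq var := undup (flatten (map fv G)).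
Definition lcount_ctx x (G : seq form) := sumn (map (lcount x) G).
Definition rcount_ctx x (G : seq form) := sumn (map (rcount x) G).

Fixpoint qwf (A : form) : bool :=
  match A with
  | Atom p args => size args == arity p
  | Tens A B | Par A B => qwf A && qwf B
  | All x A | Ex x A => [&& lcount x A == 1, rcount x A == 1 & qwf A]
  end.

Definition ling_wf (G : seq form) : Prop :=
  all qwf G /\
  forall x, x \in fv_ctx G -> lcount_ctx x G = 1 /\ rcount_ctx x G = 1.

End MLL1.

Section ETTC.
Variable P : eqType.

Inductive tsym : Type := Eps | TSym of nat.

Record elem : Type := Elem { esym : tsym; eup : seq idx; elo : seq idx }.

Definition delta (up lo : idx) : elem := Elem Eps [:: up] [:: lo].

(* tensor terms: products of elementary tensors (1 = empty product);
   products are commutative, handled by permutation in alpha-equivalence *)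
Definition tterm := seq elem.

Inductive tform : Type :=
| TLit of P & seq idx & seq idx
| TTensor of tform & tform
| TPar of tform & tform
| TNabla of idx & idx & tform          (* nabla^u_v A, binds u and v in A *)
| TTri of idx & idx & tform.           (* triangle^u_v A, binds u and v *)

Record tseq : Type := TSeq { tsterm : tterm; tsctx : seq tform }.

Fixpoint fup (i : idx) (A : tform) : nat :=
  match A with
  | TLit _ up _ => count_mem i up
  | TTensor A B | TPar A B => fup i A + fup i B
  | TNabla u v A | TTri u v A => if (i == u) || (i == v) then 0 else fup i A
  end.

Fixpoint flo (i : idx) (A : tform) : nat :=
  match A with
  | TLit _ _ lo => count_mem i lo
  | TTensor A B | TPar A B => flo i A + flo i B
  | TNabla u v A | TTri u v A => if (i == u) || (i == v) then 0 else flo i A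
  end.

Fixpoint occurs (i : idx) (A : tform) : bool :=
  match A with
  | TLit _ up lo => (i \in up) || (i \in lo)
  | TTensor A B | TPar A B => occurs i A || occurs i B
  | TNabla u v A | TTri u v A => [|| i == u, i == v | occurs i A]
  end.

Definition occurs_elem (i : idx) (e : elem) : bool := (i \in eup e) || (i \in elo e).

Definition occurs_seq (i : idx) (S : tseq) : bool :=
  has (occurs_elem i) (tsterm S) || has (occurs i) (tsctx S).

Definition ren (j i k : idx) : idx := if k == i then j else k.

Fixpoint sub_up (j i : idx) (A : tform) : tform :=
  match A with
  | TLit p up lo => TLit p (map (ren j i) up) lo
  | TTensor A B => TTensor (sub_up j i A) (sub_up j i B)
  | TPar A B => TPar (sub_up j i A) (sub_up j i B)
  | TNabla u v A => TNabla u v (if (i == u) || (i == v) then A else sub_up j i A)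
  | TTri u v A => TTri u v (if (i == u) || (i == v) then A else sub_up j i A)
  end.

Fixpoint sub_lo (j i : idx) (A : tform) : tform :=
  match A with
  | TLit p up lo => TLit p up (map (ren j i) lo)
  | TTensor A B => TTensor (sub_lo j i A) (sub_lo j i B)
  | TPar A B => TPar (sub_lo j i A) (sub_lo j i B)
  | TNabla u v A => TNabla u v (if (i == u) || (i == v) then A else sub_lo j i A)
  | TTri u v A => TTri u v (if (i == u) || (i == v) then A else sub_lo j i A)
  end.

(* alpha-equivalence: env = stack of pairs of corresponding bound indices,
   s = renaming applied to free indices *)
Fixpoint ilookup (env : seq (idx * idx)) (s : idx -> idx) (i j : idx) : bool :=
  match env with
  | [::] => j == s i
  | (a, b) :: env' =>
      if (a == i) && (b == j) then true
      else if (a == i) || (b == j) then false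
      else ilookup env' s i j
  end.

Fixpoint aeq (env : seq (idx * idx)) (s : idx -> idx) (A B : tform) : bool :=
  match A, B with
  | TLit p up lo, TLit q up' lo' =>
      [&& p == q, all2 (ilookup env s) up up' & all2 (ilookup env s) lo lo']
  | TTensor A1 A2, TTensor B1 B2 => aeq env s A1 B1 && aeq env s A2 B2
  | TPar A1 A2, TPar B1 B2 => aeq env s A1 B1 && aeq env s A2 B2
  | TNabla u v A, TNabla u' v' B => aeq ((u, u') :: (v, v') :: env) s A B
  | TTri u v A, TTri u' v' B => aeq ((u, u') :: (v, v') :: env) s A B
  | _, _ => false
  end.

Definition ren_elem (s : idx -> idx) (e : elem) : elem :=
  Elem (esym e) (map s (eup e)) (map s (elo e)).

(* alpha-equivalence of tensor sequents: renaming bound indices and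
   consistently (injectively) renaming free indices; the tensor term is a
   commutative product (taken up to permutation of its factors) *)
Definition tseq_alpha (S1 S2 : tseq) : Prop :=
  exists s : idx -> idx, injective s /\
    Permutation (map (ren_elem s) (tsterm S1)) (tsterm S2) /\
    all2 (aeq [::] s) (tsctx S1) (tsctx S2).

Definition fup_ctx i (G : seq tform) := sumn (map (fup i) G).
Definition flo_ctx i (G : seq tform) := sumn (map (flo i) G).

Inductive eta_step : tseq -> tseq -> Prop :=
| eta_up (t : tterm) (G : seq tform) (i j : idx) :
    0 < fup_ctx i G -> 0 < flo_ctx i G -> ~~ occurs_seq j (TSeq t G) ->
    eta_step (TSeq t G) (TSeq (delta i j :: t) (map (sub_up j i) G))
| eta_lo (t : tterm) (G : seq tform) (i j : idx) :
    0 < fup_ctx i G -> 0 < flo_ctx i G -> ~~ occurs_seq j (TSeq t G) ->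
    eta_step (TSeq t G) (TSeq (delta j i :: t) (map (sub_lo j i) G)).

Definition alpha_eta_equiv : tseq -> tseq -> Prop :=
  clos_refl_sym_trans tseq (fun S1 S2 => tseq_alpha S1 S2 \/ eta_step S1 S2).

End ETTC.

Section Translations.
Variables (P : eqType) (lval arity : P -> nat).

(* eta-long: variable x gives the two indices x^l = 2x and x^r = 2x+1 *)
Definition idx_l (x : var) : idx := (2 * x)%N.
Definition idx_r (x : var) : idx := (2 * x).+1.

Fixpoint long_tr (A : form P) : tform P :=
  match A with
  | Atom p args =>
      TLit p (map idx_l (take (lval p) args)) (map idx_r (drop (lval p) args))
  | Tens A B => TTensor (long_tr A) (long_tr B)
  | Par A B => TPar (long_tr A) (long_tr B)
  | All x A => TNabla (idx_r x) (idx_l x) (long_tr A)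
  | Ex x A => TTri (idx_r x) (idx_l x) (long_tr A)
  end.

Definition long_tr_seq (G : seq (form P)) : tseq P :=
  TSeq [seq delta (idx_r x) (idx_l x) | x <- fv_ctx G] (map long_tr G).

(* eta-reduced translation, defined up to the choice of the "suitable"
   (fresh, distinct) bound indices u, v: a relation *)
Inductive red_tr : form P -> tform P -> Prop :=
| red_atom p args :
    red_tr (Atom p args) (TLit p (take (lval p) args) (drop (lval p) args))
| red_tens A B A' B' :
    red_tr A A' -> red_tr B B' -> red_tr (Tens A B) (TTensor A' B')
| red_par A B A' B' :
    red_tr A A' -> red_tr B B' -> red_tr (Par A B) (TPar A' B')
| red_all x A A' u v :
    red_tr A A' -> u != v -> ~~ occurs u A' -> ~~ occurs v A' ->
    red_tr (All x A) (TNabla u v (sub_lo u x (sub_up v x A')))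
| red_ex x A A' u v :
    red_tr A A' -> u != v -> ~~ occurs u A' -> ~~ occurs v A' ->
    red_tr (Ex x A) (TTri u v (sub_lo u x (sub_up v x A'))).

Definition red_tr_seq (G : seq (form P)) (S : tseq P) : Prop :=
  tsterm S = [::] /\ Forall2 red_tr G (tsctx S).

End Translations.

(* Main.v *)
Require Import Defs.
From Stdlib Require Import Relations List Permutation.
From mathcomp Require Import all_boot.
From mathcomp Require Import zify.

Set Implicit Arguments.
Unset Strict Implicit.
Unset Printing Implicit Defensive.

Section Aux.
Variable P : eqType.

Definition ext (u u' : idx) (f : idx -> idx -> bool) (i j : idx) : bool :=
  if (u == i) && (u' == j) then true
  else if (u == i) || (u' == j) then false else f i j.

Fixpoint gaeq (fu fl : idx -> idx -> bool) (A B : tform P) : bool :=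
  match A, B with
  | TLit p up lo, TLit q up' lo' =>
      [&& p == q, all2 fu up up' & all2 fl lo lo']
  | TTensor A1 A2, TTensor B1 B2 => gaeq fu fl A1 B1 && gaeq fu fl A2 B2
  | TPar A1 A2, TPar B1 B2 => gaeq fu fl A1 B1 && gaeq fu fl A2 B2
  | TNabla u v A, TNabla u' v' B =>
      gaeq (ext u u' (ext v v' fu)) (ext u u' (ext v v' fl)) A B
  | TTri u v A, TTri u' v' B =>
      gaeq (ext u u' (ext v v' fu)) (ext u u' (ext v v' fl)) A B
  | _, _ => false
  end.

Lemma all2_ext (f g : idx -> idx -> bool) (s t : seq idx) :
  (forall i j, f i j = g i j) -> all2 f s t = all2 g s t.
Proof. move=> H; elim: s t => [|a s IH] [|b t] //=; by rewrite H IH. Qed.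

Lemma all2_mapl (f : idx -> idx -> bool) (h : idx -> idx) (s t : seq idx) :
  all2 f (map h s) t = all2 (fun k m => f (h k) m) s t.
Proof. elim: s t => [|a s IH] [|b t] //=; by rewrite IH. Qed.

Lemma ext_pw u u' f g : (forall i j, f i j = g i j) ->
  forall i j, ext u u' f i j = ext u u' g i j.
Proof. by move=> H i j; rewrite /ext H. Qed.

Lemma gaeq_ext (A B : tform P) fu fl fu' fl' :
  (forall i j, fu i j = fu' i j) -> (forall i j, fl i j = fl' i j) ->
  gaeq fu fl A B = gaeq fu' fl' A B.
Proof.
elim: A B fu fl fu' fl' => [p up lo|A1 IH1 A2 IH2|A1 IH1 A2 IH2|u v A IH|u v A IH]
  [q up' lo'|B1 B2|B1 B2|u' v' B|u' v' B] fu fl fu' fl' Hu Hl //=.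
- by rewrite (all2_ext _ _ Hu) (all2_ext _ _ Hl).
- by rewrite (IH1 B1 _ _ _ _ Hu Hl) (IH2 B2 _ _ _ _ Hu Hl).
- by rewrite (IH1 B1 _ _ _ _ Hu Hl) (IH2 B2 _ _ _ _ Hu Hl).
- by apply: IH; do 2 apply: ext_pw.
- by apply: IH; do 2 apply: ext_pw.
Qed.

Lemma aeq_gaeq env s (A B : tform P) :
  aeq env s A B = gaeq (ilookup env s) (ilookup env s) A B.
Proof.
elim: A B env => [p up lo|A1 IH1 A2 IH2|A1 IH1 A2 IH2|u v A IH|u v A IH]
  [q up' lo'|B1 B2|B1 B2|u' v' B|u' v' B] env //=.
all: by rewrite ?IH1 ?IH2 ?IH.
Qed.

Lemma gaeq_sub_up j i (A B : tform P) fu fl : ~~ occurs j A ->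
  gaeq fu fl (sub_up j i A) B = gaeq (fun k m => fu (ren j i k) m) fl A B.
Proof.
elim: A B fu fl => [p up lo|A1 IH1 A2 IH2|A1 IH1 A2 IH2|u v A IH|u v A IH]
  [q up' lo'|B1 B2|B1 B2|u' v' B|u' v' B] fu fl //=.
- by rewrite all2_mapl.
- by rewrite negb_or => /andP[h1 h2]; rewrite IH1 // IH2.
- by rewrite negb_or => /andP[h1 h2]; rewrite IH1 // IH2.
- rewrite !negb_or => /and3P[hu hv hA].
  case: ifP => hi.
    apply: gaeq_ext => // k m; rewrite /ext /ren.
    case: (k =P i) => [->|_] //.
    by case/orP: hi => /eqP ->; rewrite ?eqxx //=; case: (v == i); case: (_ == m).
  rewrite IH //; apply: gaeq_ext => // k m; rewrite /ext /ren.
  case: (k =P i) => [->|_] //.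
  move: hi; rewrite ![u == _]eq_sym ![v == _]eq_sym (negbTE hu) (negbTE hv).
  by case: (i =P u); case: (i =P v).
- rewrite !negb_or => /and3P[hu hv hA].
  case: ifP => hi.
    apply: gaeq_ext => // k m; rewrite /ext /ren.
    case: (k =P i) => [->|_] //.
    by case/orP: hi => /eqP ->; rewrite ?eqxx //=; case: (v == i); case: (_ == m).
  rewrite IH //; apply: gaeq_ext => // k m; rewrite /ext /ren.
  case: (k =P i) => [->|_] //.
  move: hi; rewrite ![u == _]eq_sym ![v == _]eq_sym (negbTE hu) (negbTE hv).
  by case: (i =P u); case: (i =P v).
Qed.
Lemma gaeq_sub_lo j i (A B : tform P) fu fl : ~~ occurs j A ->
  gaeq fu fl (sub_lo j i A) B = gaeq fu (fun k m => fl (ren j i k) m) A B.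
Proof.
elim: A B fu fl => [p up lo|A1 IH1 A2 IH2|A1 IH1 A2 IH2|u v A IH|u v A IH]
  [q up' lo'|B1 B2|B1 B2|u' v' B|u' v' B] fu fl //=.
- by rewrite all2_mapl.
- by rewrite negb_or => /andP[h1 h2]; rewrite IH1 // IH2.
- by rewrite negb_or => /andP[h1 h2]; rewrite IH1 // IH2.
- rewrite !negb_or => /and3P[hu hv hA].
  case: ifP => hi.
    apply: gaeq_ext => // k m; rewrite /ext /ren.
    case: (k =P i) => [->|_] //.
    by case/orP: hi => /eqP ->; rewrite ?eqxx //=; case: (v == i); case: (_ == m).
  rewrite IH //; apply: gaeq_ext => // k m; rewrite /ext /ren.
  case: (k =P i) => [->|_] //.
  move: hi; rewrite ![u == _]eq_sym ![v == _]eq_sym (negbTE hu) (negbTE hv).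
  by case: (i =P u); case: (i =P v).
- rewrite !negb_or => /and3P[hu hv hA].
  case: ifP => hi.
    apply: gaeq_ext => // k m; rewrite /ext /ren.
    case: (k =P i) => [->|_] //.
    by case/orP: hi => /eqP ->; rewrite ?eqxx //=; case: (v == i); case: (_ == m).
  rewrite IH //; apply: gaeq_ext => // k m; rewrite /ext /ren.
  case: (k =P i) => [->|_] //.
  move: hi; rewrite ![u == _]eq_sym ![v == _]eq_sym (negbTE hu) (negbTE hv).
  by case: (i =P u); case: (i =P v).
Qed.

Lemma count_ren_other (k j i : idx) (s : seq idx) : k != i -> k != j ->
  count_mem k (map (ren j i) s) = count_mem k s.
Proof.
move=> hi hj; elim: s => [|a s IH] //=; rewrite IH /ren.
case: ifP => [/eqP ->|_] //.
by rewrite ![_ == k]eq_sym (negbTE hi) (negbTE hj).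
Qed.

Lemma count_ren_self (j i : idx) (s : seq idx) : i != j ->
  count_mem i (map (ren j i) s) = 0.
Proof.
move=> h; elim: s => [|a s IH] //=; rewrite IH /ren.
case: ifP => [_|/negbT hai]; first by rewrite eq_sym (negbTE h). by rewrite (negbTE hai).
Qed.

Lemma mem_ren k j i (s : seq idx) : k \in map (ren j i) s -> (k \in s) || (k == j).
Proof.
by case/mapP => a ha ->; rewrite /ren; case: (a =P i) => _; rewrite ?eqxx ?ha ?orbT.
Qed.

Lemma mem_ren' k j i (s : seq idx) : k \in s -> k != i -> k \in map (ren j i) s.
Proof. by move=> h hk; apply/mapP; exists k => //; rewrite /ren (negbTE hk). Qed.

Ltac tind A := elim: A => [p up lo|A1 IH1 A2 IH2|A1 IH1 A2 IH2|u v A IH|u v A IH].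

Lemma fup_sub_up_other k j i (A : tform P) : k != i -> k != j ->
  fup k (sub_up j i A) = fup k A.
Proof.
move=> hi hj; tind A => //=; rewrite ?IH1 ?IH2 ?count_ren_other //;
  by case: ifP => // _; case: ifP => // _; rewrite IH.
Qed.

Lemma fup_sub_up_self j i (A : tform P) : i != j -> fup i (sub_up j i A) = 0.
Proof.
move=> h; tind A => //=; rewrite ?IH1 ?IH2 ?count_ren_self //;
  by case: ifP => // /negbT; rewrite negb_or => /andP[/negbTE -> /negbTE ->].
Qed.

Lemma fup_sub_lo k j i (A : tform P) : fup k (sub_lo j i A) = fup k A.
Proof. tind A => //=; rewrite ?IH1 ?IH2 //;
  by case: ifP => // _; case: ifP => // _; rewrite IH. Qed.

Lemma flo_sub_lo_other k j i (A : tform P) : k != i -> k != j ->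
  flo k (sub_lo j i A) = flo k A.
Proof.
move=> hi hj; tind A => //=; rewrite ?IH1 ?IH2 ?count_ren_other //;
  by case: ifP => // _; case: ifP => // _; rewrite IH.
Qed.

Lemma flo_sub_lo_self j i (A : tform P) : i != j -> flo i (sub_lo j i A) = 0.
Proof.
move=> h; tind A => //=; rewrite ?IH1 ?IH2 ?count_ren_self //;
  by case: ifP => // /negbT; rewrite negb_or => /andP[/negbTE -> /negbTE ->].
Qed.

Lemma flo_sub_up k j i (A : tform P) : flo k (sub_up j i A) = flo k A.
Proof. tind A => //=; rewrite ?IH1 ?IH2 //;
  by case: ifP => // _; case: ifP => // _; rewrite IH. Qed.

Lemma fup_nocc k (A : tform P) : ~~ occurs k A -> fup k A = 0.
Proof.
tind A => /=.
- by rewrite negb_or => /andP[h _]; apply/eqP; rewrite -leqn0 leqNgt -has_count has_pred1.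
- by rewrite negb_or => /andP[h1 h2]; rewrite IH1 // IH2.
- by rewrite negb_or => /andP[h1 h2]; rewrite IH1 // IH2.
- by rewrite !negb_or => /and3P[_ _ h]; rewrite IH //; case: ifP.
- by rewrite !negb_or => /and3P[_ _ h]; rewrite IH //; case: ifP.
Qed.

Lemma flo_nocc k (A : tform P) : ~~ occurs k A -> flo k A = 0.
Proof.
tind A => /=.
- by rewrite negb_or => /andP[_ h]; apply/eqP; rewrite -leqn0 leqNgt -has_count has_pred1.
- by rewrite negb_or => /andP[h1 h2]; rewrite IH1 // IH2.
- by rewrite negb_or => /andP[h1 h2]; rewrite IH1 // IH2.
- by rewrite !negb_or => /and3P[_ _ h]; rewrite IH //; case: ifP.
- by rewrite !negb_or => /and3P[_ _ h]; rewrite IH //; case: ifP.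
Qed.

Lemma occ_sub_up k j i (A : tform P) : occurs k (sub_up j i A) -> occurs k A || (k == j).
Proof.
tind A => /=.
- case/orP => [/mem_ren|->]; last by rewrite orbT.
  by case/orP => ->; rewrite ?orbT.
- by case/orP => [/IH1|/IH2] /orP[] ->; rewrite ?orbT.
- by case/orP => [/IH1|/IH2] /orP[] ->; rewrite ?orbT.
- case: ifP => _ /or3P[h|h|h]; rewrite ?h ?orbT //;
  by case/IH/orP: h => ->; rewrite ?orbT.
- case: ifP => _ /or3P[h|h|h]; rewrite ?h ?orbT //;
  by case/IH/orP: h => ->; rewrite ?orbT.
Qed.

Lemma occ_sub_lo k j i (A : tform P) : occurs k (sub_lo j i A) -> occurs k A || (k == j).
Proof.
tind A => /=.
- case/orP => [->|/mem_ren]; first by [].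
  by case/orP => ->; rewrite ?orbT.
- by case/orP => [/IH1|/IH2] /orP[] ->; rewrite ?orbT.
- by case/orP => [/IH1|/IH2] /orP[] ->; rewrite ?orbT.
- case: ifP => _ /or3P[h|h|h]; rewrite ?h ?orbT //;
  by case/IH/orP: h => ->; rewrite ?orbT.
- case: ifP => _ /or3P[h|h|h]; rewrite ?h ?orbT //;
  by case/IH/orP: h => ->; rewrite ?orbT.
Qed.

Lemma occ_sub_up' k j i (A : tform P) : occurs k A -> k != i -> occurs k (sub_up j i A).
Proof.
move=> + hk; tind A => /=.
- by case/orP => [h|->]; rewrite ?orbT // mem_ren'.
- by case/orP => [/IH1|/IH2] ->; rewrite ?orbT.
- by case/orP => [/IH1|/IH2] ->; rewrite ?orbT.
- by case/or3P => [->|->|h] //; rewrite ?orbT //; case: ifP => _; rewrite ?h ?IH ?orbT.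
- by case/or3P => [->|->|h] //; rewrite ?orbT //; case: ifP => _; rewrite ?h ?IH ?orbT.
Qed.

Lemma occ_sub_lo' k j i (A : tform P) : occurs k A -> k != i -> occurs k (sub_lo j i A).
Proof.
move=> + hk; tind A => /=.
- by case/orP => [->|h]; rewrite ?orbT // mem_ren' ?orbT.
- by case/orP => [/IH1|/IH2] ->; rewrite ?orbT.
- by case/orP => [/IH1|/IH2] ->; rewrite ?orbT.
- by case/or3P => [->|->|h] //; rewrite ?orbT //; case: ifP => _; rewrite ?h ?IH ?orbT.
- by case/or3P => [->|->|h] //; rewrite ?orbT //; case: ifP => _; rewrite ?h ?IH ?orbT.
Qed.
End Aux.

Section Red.
Variables (P : eqType) (lval : P -> nat).

Lemma occurs_fv (A : form P) A' x : red_tr lval A A' -> x \in fv A -> occurs x A'.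
Proof.
elim=> {A A'} /=.
- by move=> p args; rewrite -{1}(cat_take_drop (lval p) args) mem_cat.
- by move=> A B A' B' _ IHA _ IHB; rewrite mem_cat => /orP[/IHA|/IHB] ->; rewrite ?orbT.
- by move=> A B A' B' _ IHA _ IHB; rewrite mem_cat => /orP[/IHA|/IHB] ->; rewrite ?orbT.
- move=> y A A' u v _ IH _ _ _; rewrite mem_filter => /andP[hy /IH h].
  by rewrite occ_sub_lo' ?occ_sub_up' ?orbT.
- move=> y A A' u v _ IH _ _ _; rewrite mem_filter => /andP[hy /IH h].
  by rewrite occ_sub_lo' ?occ_sub_up' ?orbT.
Qed.

Lemma red_fup (A : form P) A' x : red_tr lval A A' -> fup x A' = lcount lval x A.
Proof.
elim=> {A A'} /=.
- by [].
- by move=> A B A' B' _ -> _ ->.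
- by move=> A B A' B' _ -> _ ->.
- move=> y A A' u v _ IH huv hu hv.
  case: (x =P u) => [exu|/eqP hxu].
    by rewrite /=; case: (y == x) => //; rewrite -IH fup_nocc ?exu.
  case: (x =P v) => [exv|/eqP hxv].
    by rewrite /=; case: (y == x) => //; rewrite -IH fup_nocc ?exv.
  rewrite /= fup_sub_lo.
  case: (y =P x) => [->|/eqP hyx]; first by rewrite fup_sub_up_self // eq_sym.
  by rewrite fup_sub_up_other // eq_sym.
- move=> y A A' u v _ IH huv hu hv.
  case: (x =P u) => [exu|/eqP hxu].
    by rewrite /=; case: (y == x) => //; rewrite -IH fup_nocc ?exu.
  case: (x =P v) => [exv|/eqP hxv].
    by rewrite /=; case: (y == x) => //; rewrite -IH fup_nocc ?exv.
  rewrite /= fup_sub_lo.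
  case: (y =P x) => [->|/eqP hyx]; first by rewrite fup_sub_up_self // eq_sym.
  by rewrite fup_sub_up_other // eq_sym.
Qed.

Lemma red_flo (A : form P) A' x : red_tr lval A A' -> flo x A' = rcount lval x A.
Proof.
elim=> {A A'} /=.
- by [].
- by move=> A B A' B' _ -> _ ->.
- by move=> A B A' B' _ -> _ ->.
- move=> y A A' u v _ IH huv hu hv.
  case: (x =P u) => [exu|/eqP hxu].
    by rewrite /=; case: (y == x) => //; rewrite -IH flo_nocc ?exu.
  case: (x =P v) => [exv|/eqP hxv].
    by rewrite /=; case: (y == x) => //; rewrite -IH flo_nocc ?exv.
  rewrite /=.
  case: (y =P x) => [->|/eqP hyx]; first by rewrite flo_sub_lo_self // eq_sym.
  by rewrite flo_sub_lo_other // ?flo_sub_up // eq_sym.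
- move=> y A A' u v _ IH huv hu hv.
  case: (x =P u) => [exu|/eqP hxu].
    by rewrite /=; case: (y == x) => //; rewrite -IH flo_nocc ?exu.
  case: (x =P v) => [exv|/eqP hxv].
    by rewrite /=; case: (y == x) => //; rewrite -IH flo_nocc ?exv.
  rewrite /=.
  case: (y =P x) => [->|/eqP hyx]; first by rewrite flo_sub_lo_self // eq_sym.
  by rewrite flo_sub_lo_other // ?flo_sub_up // eq_sym.
Qed.


Lemma ext_same u u' (f : idx -> idx -> bool) m : ext u u' f u m = (u' == m).
Proof. by rewrite /ext eqxx /=; case: (u' == m). Qed.

Lemma ext_other u u' (f : idx -> idx -> bool) k m :
  u != k -> (u' == m -> f k m = false) -> ext u u' f k m = f k m.
Proof.
move=> h h'; rewrite /ext (negbTE h) /=; case E: (u' == m) => //.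
by rewrite h'.
Qed.

Lemma all2_map_diag (f : idx -> idx -> bool) (g : idx -> idx) (s : seq idx) :
  (forall x, x \in s -> f x (g x)) -> all2 f s (map g s).
Proof.
elim: s => [|a s IH] //= h; rewrite h ?inE ?eqxx //= IH // => x hx.
by rewrite h // inE hx orbT.
Qed.

Lemma red_gaeq (A : form P) A' : red_tr lval A A' -> forall fu fl,
  (forall x, x \in fv A -> forall m, fu x m = (m == idx_l x)) ->
  (forall x, x \in fv A -> forall m, fl x m = (m == idx_r x)) ->
  gaeq fu fl A' (long_tr lval A).
Proof.
elim=> {A A'} /=.
- move=> p args fu fl hu hl; rewrite eqxx /=.
  apply/andP; split; apply: all2_map_diag => x hx.
    by rewrite hu ?eqxx // (mem_take hx).
  by rewrite hl ?eqxx // (mem_drop hx).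
- move=> A B A' B' _ IHA _ IHB fu fl hu hl.
  have sA : forall x, x \in fv A -> x \in fv A ++ fv B by move=> x h; rewrite mem_cat h.
  have sB : forall x, x \in fv B -> x \in fv A ++ fv B by move=> x h; rewrite mem_cat h orbT.
  by rewrite (IHA fu fl (fun x h => hu x (sA x h)) (fun x h => hl x (sA x h)))
     (IHB fu fl (fun x h => hu x (sB x h)) (fun x h => hl x (sB x h))).
- move=> A B A' B' _ IHA _ IHB fu fl hu hl.
  have sA : forall x, x \in fv A -> x \in fv A ++ fv B by move=> x h; rewrite mem_cat h.
  have sB : forall x, x \in fv B -> x \in fv A ++ fv B by move=> x h; rewrite mem_cat h orbT.
  by rewrite (IHA fu fl (fun x h => hu x (sA x h)) (fun x h => hl x (sA x h)))
     (IHB fu fl (fun x h => hu x (sB x h)) (fun x h => hl x (sB x h))).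
- move=> y A A' u v hr IH huv hu hv fu fl Hu Hl.
  rewrite gaeq_sub_lo; last first.
    apply/negP => /occ_sub_up /orP[]; first exact/negP.
    by move=> e; rewrite e in huv.
  rewrite gaeq_sub_up //.
  apply: IH => x hx m; rewrite /ren.
  + case: (x =P y) => [->|/eqP hxy].
      rewrite ext_other //; first by rewrite ext_same eq_sym.
      by move/eqP <-; rewrite ext_same /idx_l /idx_r; apply/eqP; lia.
    rewrite ?(negbTE hxy).
    have hxA := occurs_fv hr hx.
    have hux : u != x by apply/eqP => e; rewrite e hxA in hu.
    have hvx : v != x by apply/eqP => e; rewrite e hxA in hv.
    have hx' : x \in fv (All y A) by rewrite /= mem_filter hxy hx.
    have Hux := Hu x hx'.
    have ne1 : idx_r y != idx_l x by apply/eqP; rewrite /idx_l /idx_r; lia.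
    have ne2 : idx_l y != idx_l x by apply/eqP; rewrite /idx_l; move: hxy => /eqP; lia.
    rewrite ext_other //; last first.
      move/eqP <-; rewrite ext_other // ?Hux //; first exact/negbTE.
      by move=> _; exact/negbTE.
    rewrite ext_other // => /eqP <-; rewrite Hux; exact/negbTE.
  + case: (x =P y) => [->|/eqP hxy].
      by rewrite ext_same eq_sym.
    rewrite ?(negbTE hxy).
    have hxA := occurs_fv hr hx.
    have hux : u != x by apply/eqP => e; rewrite e hxA in hu.
    have hvx : v != x by apply/eqP => e; rewrite e hxA in hv.
    have hx' : x \in fv (All y A) by rewrite /= mem_filter hxy hx.
    have Hlx := Hl x hx'.
    have ne1 : idx_r y != idx_r x by apply/eqP; rewrite /idx_r; move: hxy => /eqP; lia.
    have ne2 : idx_l y != idx_r x by apply/eqP; rewrite /idx_l /idx_r; lia.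
    rewrite ext_other //; last first.
      move/eqP <-; rewrite ext_other // ?Hlx //; first exact/negbTE.
      by move=> _; exact/negbTE.
    rewrite ext_other // => /eqP <-; rewrite Hlx; exact/negbTE.
- move=> y A A' u v hr IH huv hu hv fu fl Hu Hl.
  rewrite gaeq_sub_lo; last first.
    apply/negP => /occ_sub_up /orP[]; first exact/negP.
    by move=> e; rewrite e in huv.
  rewrite gaeq_sub_up //.
  apply: IH => x hx m; rewrite /ren.
  + case: (x =P y) => [->|/eqP hxy].
      rewrite ext_other //; first by rewrite ext_same eq_sym.
      by move/eqP <-; rewrite ext_same /idx_l /idx_r; apply/eqP; lia.
    rewrite ?(negbTE hxy).
    have hxA := occurs_fv hr hx.
    have hux : u != x by apply/eqP => e; rewrite e hxA in hu.
    have hvx : v != x by apply/eqP => e; rewrite e hxA in hv.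
    have hx' : x \in fv (Ex y A) by rewrite /= mem_filter hxy hx.
    have Hux := Hu x hx'.
    have ne1 : idx_r y != idx_l x by apply/eqP; rewrite /idx_l /idx_r; lia.
    have ne2 : idx_l y != idx_l x by apply/eqP; rewrite /idx_l; move: hxy => /eqP; lia.
    rewrite ext_other //; last first.
      move/eqP <-; rewrite ext_other // ?Hux //; first exact/negbTE.
      by move=> _; exact/negbTE.
    rewrite ext_other // => /eqP <-; rewrite Hux; exact/negbTE.
  + case: (x =P y) => [->|/eqP hxy].
      by rewrite ext_same eq_sym.
    rewrite ?(negbTE hxy).
    have hxA := occurs_fv hr hx.
    have hux : u != x by apply/eqP => e; rewrite e hxA in hu.
    have hvx : v != x by apply/eqP => e; rewrite e hxA in hv.
    have hx' : x \in fv (Ex y A) by rewrite /= mem_filter hxy hx.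
    have Hlx := Hl x hx'.
    have ne1 : idx_r y != idx_r x by apply/eqP; rewrite /idx_r; move: hxy => /eqP; lia.
    have ne2 : idx_l y != idx_r x by apply/eqP; rewrite /idx_l /idx_r; lia.
    rewrite ext_other //; last first.
      move/eqP <-; rewrite ext_other // ?Hlx //; first exact/negbTE.
      by move=> _; exact/negbTE.
    rewrite ext_other // => /eqP <-; rewrite Hlx; exact/negbTE.
Qed.
End Red.

Section Final.
Variable P : eqType.

Definition Fl (N : nat) (l : seq idx) (A : tform P) : tform P :=
  foldl (fun B x => sub_up (N + x) x B) A l.

Lemma Fl_rcons N l x A : Fl N (rcons l x) A = sub_up (N + x) x (Fl N l A).
Proof. by rewrite /Fl foldl_rcons. Qed.

Lemma occ_Fl N l A k : occurs k (Fl N l A) -> occurs k A || (k \in map (addn N) l).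
Proof.
elim/last_ind: l => [|l x IH] /=; first by move->.
rewrite Fl_rcons map_rcons mem_rcons inE => /occ_sub_up /orP[/IH|->]; last by rewrite orbT.
by case/orP => ->; rewrite ?orbT.
Qed.

Lemma gaeq_Fl N l (A B : tform P) fu fl :
  (forall k, occurs k A -> k < N) -> uniq l -> (forall x, x \in l -> x < N) ->
  gaeq fu fl (Fl N l A) B = gaeq (fun k m => fu (if k \in l then N + k else k) m) fl A B.
Proof.
elim/last_ind: l fu => [|l x IH] fu hA hu hl.
  by apply: gaeq_ext => // i j; rewrite in_nil.
move: hu; rewrite rcons_uniq => /andP[hx hu].
have hxN : x < N by apply: hl; rewrite mem_rcons inE eqxx.
rewrite Fl_rcons gaeq_sub_up; last first.
  apply/negP => /occ_Fl /orP[/hA|/mapP[y hy /eqP]]; first by lia.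
  by rewrite eqn_add2l => /eqP e; rewrite e hy in hx.
rewrite IH //; last by move=> y hy; apply: hl; rewrite mem_rcons inE hy orbT.
apply: gaeq_ext => // k m; rewrite mem_rcons inE /ren.
case hk: (k \in l).
  rewrite orbT /=; case: ifP => // /eqP e; have : k < N by apply: hl; rewrite mem_rcons inE hk orbT.
  by lia.
by case: (k =P x) => [->|_]; rewrite ?eqxx.
Qed.

Lemma fup_Fl N l (A : tform P) x : x \notin l -> x < N -> fup x (Fl N l A) = fup x A.
Proof.
elim/last_ind: l => [|l y IH] // hx hN.
move: hx; rewrite mem_rcons inE negb_or => /andP[hxy hx].
by rewrite Fl_rcons fup_sub_up_other ?IH //; apply/eqP; lia.
Qed.

Lemma flo_Fl N l (A : tform P) x : flo x (Fl N l A) = flo x A.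
Proof.
elim/last_ind: l => [|l y IH] //.
by rewrite Fl_rcons flo_sub_up IH.
Qed.

Fixpoint maxidx (A : tform P) : nat :=
  match A with
  | TLit _ up lo => sumn up + sumn lo
  | TTensor A B | TPar A B => maxidx A + maxidx B
  | TNabla u v A | TTri u v A => u + v + maxidx A
  end.

Lemma le_sumn k s : k \in s -> k <= sumn s.
Proof.
elim: s => [|a s IH] //=; rewrite inE => /orP[/eqP ->|/IH]; lia.
Qed.

Lemma occ_le k (A : tform P) : occurs k A -> k <= maxidx A.
Proof.
elim: A => [p up lo|A1 IH1 A2 IH2|A1 IH1 A2 IH2|u v A IH|u v A IH] /=.
- by case/orP => /le_sumn; lia.
- by case/orP => [/IH1|/IH2]; lia.
- by case/orP => [/IH1|/IH2]; lia.
- by case/or3P => [/eqP->|/eqP->|/IH]; lia.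
- by case/or3P => [/eqP->|/eqP->|/IH]; lia.
Qed.

Lemma has_le k (G : seq (tform P)) : has (occurs k) G -> k <= sumn (map maxidx G).
Proof.
elim: G => [|A G IH] //= /orP[/occ_le|/IH]; lia.
Qed.

End Final.

Lemma rev_List (T : Type) (l : seq T) : rev l = List.rev l.
Proof. by elim: l => //= a l IH; rewrite rev_cons IH -cats1. Qed.

Lemma hasPn' (T : Type) (a : pred T) (s : seq T) :
  (forall x, List.In x s -> ~~ a x) -> ~~ has a s.
Proof.
elim: s => //= x s IH h; rewrite negb_or h /=; last by left.
by apply: IH => y hy; apply: h; right.
Qed.

Lemma hasIn (T : Type) (a : pred T) (s : seq T) x : List.In x s -> a x -> has a s.
Proof.
elim: s => //= y s IH [<- ->|/IH h /h ->] //; by rewrite orbT.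
Qed.

Section Main.
Variables (P : eqType) (lval : P -> nat).

Lemma sum_fup (G : seq (form P)) G' x : Forall2 (red_tr lval) G G' ->
  sumn (map (fup x) G') = lcount_ctx lval x G.
Proof.
rewrite /lcount_ctx; elim => //= A A' G1 G1' h _ IH.
by rewrite IH (red_fup x h).
Qed.

Lemma sum_flo (G : seq (form P)) G' x : Forall2 (red_tr lval) G G' ->
  sumn (map (flo x) G') = rcount_ctx lval x G.
Proof.
rewrite /rcount_ctx; elim => //= A A' G1 G1' h _ IH.
by rewrite IH (red_flo x h).
Qed.

Lemma fv_has (G : seq (form P)) G' x : Forall2 (red_tr lval) G G' ->
  x \in flatten (map (@fv P) G) -> has (occurs x) G'.
Proof.
elim => //= A A' G1 G1' h _ IH; rewrite mem_cat => /orP[/(occurs_fv h) -> //|/IH ->].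
by rewrite orbT.
Qed.

Lemma all2_main (G : seq (form P)) G' N L (s : idx -> idx) :
  Forall2 (red_tr lval) G G' ->
  (forall k, has (occurs k) G' -> k < N) ->
  (forall x, x \in flatten (map (@fv P) G) -> x \in L) ->
  uniq L -> (forall x, x \in L -> x < N) ->
  (forall x, x \in L -> s (N + x) = idx_l x /\ s x = idx_r x) ->
  all2 (aeq [::] s) (map (Fl N L) G') (map (long_tr lval) G).
Proof.
move=> HF; elim: HF => //= A A' G1 G1' h _ IH hN hfv hu hL hs.
rewrite IH //; last first.
- by move=> x hx; apply: hfv; rewrite mem_cat hx orbT.
- by move=> k hk; apply: hN; rewrite hk orbT.
rewrite andbT aeq_gaeq gaeq_Fl //; last by move=> k hk; apply: hN; rewrite hk.
apply: (red_gaeq h) => x hx m /=.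
  have hxL : x \in L by apply: hfv; rewrite mem_cat hx.
  by rewrite hxL; case: (hs x hxL) => -> _.
have hxL : x \in L by apply: hfv; rewrite mem_cat hx.
by case: (hs x hxL) => _ ->.
Qed.

Definition Tl N l (G' : seq (tform P)) : tseq P :=
  TSeq (rev (map (fun x => delta x (N + x)) l)) (map (Fl N l) G').

End Main.

Theorem proposition7p2 (P : eqType) (lval arity : P -> nat)
  (Hval : forall p : P, (lval p <= arity p)%N)
  (G : seq (form P)) (S : tseq P) :
  ling_wf lval arity G ->
  red_tr_seq lval G S ->
  alpha_eta_equiv (long_tr_seq lval G) S.
Proof.
move=> [_ Hfv] [Ht HF]; case: S Ht HF => t G' /= -> HF.
set L := fv_ctx G.
set N := (sumn (map (@maxidx P) G')).+1.
have hN : forall k, has (occurs k) G' -> k < N by move=> k /has_le; rewrite /N; lia.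
have hLN : forall x, x \in L -> x < N.
  by move=> x; rewrite /L /fv_ctx mem_undup => /(fv_has HF) /hN.
have hLu : uniq L := undup_uniq _.
pose s k := if N <= k then 2 * (k - N) else (2 * k).+1.
have sinj : injective s.
  by move=> a b; rewrite /s; case: (leqP N a); case: (leqP N b); lia.
have hs : forall x, x \in L -> s (N + x) = idx_l x /\ s x = idx_r x.
  move=> x hx; have := hLN x hx; rewrite /s /idx_l /idx_r.
  by case: (leqP N (N + x)); case: (leqP N x); lia.
have chain : forall l, uniq l -> {subset l <= L} ->
  clos_refl_sym_trans _ (fun S1 S2 => tseq_alpha S1 S2 \/ eta_step S1 S2)
    (TSeq [::] G') (Tl N l G').
  elim/last_ind => [|l x IH] hu hsub.
    have e : forall G0 : seq (tform P), map (Fl N [::]) G0 = G0 by elim=> //= A G0 ->.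
    by rewrite /Tl /= e; apply: rst_refl.
  move: hu; rewrite rcons_uniq => /andP[hxl hu].
  have hsub' : {subset l <= L} by move=> y hy; apply: hsub; rewrite mem_rcons inE hy orbT.
  have hxL : x \in L by apply: hsub; rewrite mem_rcons inE eqxx.
  have hxN := hLN x hxL.
  apply: rst_trans (IH hu hsub') _; apply: rst_step; right.
  have -> : Tl N (rcons l x) G' =
    TSeq (delta x (N + x) :: rev (map (fun x => delta x (N + x)) l))
         (map (sub_up (N + x) x) (map (Fl N l) G')).
    rewrite /Tl map_rcons rev_rcons -map_comp; congr TSeq.
    by apply: eq_map => A /=; rewrite Fl_rcons.
  apply: eta_up.
  - rewrite /fup_ctx -map_comp.
    have -> : map (fup x \o Fl N l) G' = map (fup x) G'
      by apply: eq_map => A /=; rewrite fup_Fl.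
    by rewrite (sum_fup x HF); case: (Hfv x hxL) => ->.
  - rewrite /flo_ctx -map_comp.
    have -> : map (flo x \o Fl N l) G' = map (flo x) G'
      by apply: eq_map => A /=; rewrite flo_Fl.
    by rewrite (sum_flo x HF); case: (Hfv x hxL) => _ ->.
  - rewrite /occurs_seq /= has_rev negb_or; apply/andP; split.
      rewrite has_map; apply/hasPn => y hy; rewrite /= /occurs_elem /= !inE.
      have hyN := hLN y (hsub' y hy).
      apply/negP => /orP[/eqP e'|/eqP e']; first by lia.
      have e2 : x = y by lia.
      by rewrite e2 hy in hxl.
    rewrite has_map; apply: hasPn' => A0 hA0 /=.
    apply/negP => /occ_Fl /orP[h|/mapP[y hy /eqP e']].
      have : has (occurs (N + x)) G' by apply: hasIn hA0 h.
      by move/hN; lia.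
    have e2 : x = y by lia.
    by rewrite e2 hy in hxl.
rewrite /alpha_eta_equiv.
apply: rst_trans (_ : clos_refl_sym_trans _ _ _ (Tl N L G')) _.
  apply: rst_sym; apply: rst_step; left.
  exists s; split; first exact: sinj.
  split; last first.
    apply: all2_main => //; first by move=> x hx; rewrite /L /fv_ctx mem_undup.
  rewrite /Tl /= map_rev -map_comp.
  have -> : map (ren_elem s \o (fun x => delta x (N + x))) L =
            map (fun x => delta (idx_r x) (idx_l x)) L.
    apply/eq_in_map => x hx; case: (hs x hx) => h1 h2.
    by rewrite /= /ren_elem /delta /= h1 h2.
  by rewrite rev_List; apply: Permutation_sym; apply: Permutation_rev.
apply: rst_sym; exact: chain.
Qed.
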